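(* Let $f\in C^2(\mathbb{R}^d)$ with $\nabla f$ globally $L$-Lipschitz, $h>0$, $\beta\ge0$, $c\le\gamma_k\le C$ ($0<c\le C$), and $\beta+\frac h2<\frac cL$. Let $(x_k)$ be generated by $y_k=x_k+\alpha_k(x_k-x_{k-1})$, $x_{k+1}=y_k-s_k\nabla f(x_k+\frac\beta h(x_k-x_{k-1}))$ ($k\ge1$) with $\alpha_k=\frac1{1+\gamma_kh}$, $s_k=h^2\alpha_k$. Let $v_k=x_k-x_{k-1}$, $\tilde\alpha=\frac{\beta L}h+\frac1{h^2}$, and $V_k=f(x_k)+\frac{\tilde\alpha}2\|v_k\|^2$. Then for every $k\ge1$, $$V_{k+1}\le V_k-\delta\|v_{k+1}\|^2,\qquad\delta=\frac ch-\frac L2-\frac{\beta L}h>0.$$ *)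

(* Defs.v *)
From HB Require Import structures.
From mathcomp Require Import all_boot all_order all_algebra.
From mathcomp Require Import all_classical all_reals all_analysis.
Set Implicit Arguments. Unset Strict Implicit. Unset Printing Implicit Defensive.
Import Order.TTheory GRing.Theory Num.Theory.
Import numFieldNormedType.Exports.
Local Open Scope ring_scope.

Definition dotv {R : realType} {d : nat} (u v : 'rV[R]_d) : R :=
  \sum_(i < d) u ord0 i * v ord0 i.
Definition enorm {R : realType} {d : nat} (v : 'rV[R]_d) : R :=
  Num.sqrt (dotv v v).

Definition is_gradient {R : realType} {d : nat}
  (f : 'rV[R]_d -> R) (g : 'rV[R]_d -> 'rV[R]_d) : Prop :=
  forall x : 'rV[R]_d, differentiable f x /\
    (forall v : 'rV[R]_d, ('d f x : 'rV[R]_d -> R) v = dotv (g x) v).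

Definition C2_with_gradient {R : realType} {d : nat}
  (f : 'rV[R]_d -> R) (g : 'rV[R]_d -> 'rV[R]_d) : Prop :=
  is_gradient f g /\
  (forall x : 'rV[R]_d, differentiable g x) /\
  (forall v : 'rV[R]_d,
      continuous (fun x : 'rV[R]_d => ('d g x : 'rV[R]_d -> 'rV[R]_d) v)).

Definition lipschitz_euclid {R : realType} {d : nat}
  (g : 'rV[R]_d -> 'rV[R]_d) (L : R) : Prop :=
  forall x y : 'rV[R]_d, enorm (g x - g y) <= L * enorm (x - y).

(* Main.v *)
Require Import Defs.
From HB Require Import structures.
From mathcomp Require Import all_boot all_order all_algebra.
From mathcomp Require Import all_classical all_reals all_analysis.
From mathcomp Require Import ring lra.
Import Order.TTheory GRing.Theory Num.Theory.
Import numFieldNormedType.Exports.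
Local Open Scope ring_scope.

Section S.
Context {R : realType} {d : nat}.
Implicit Types u v w : 'rV[R]_d.

Lemma dotvC u v : dotv u v = dotv v u.
Proof. by rewrite /dotv; apply: eq_bigr => i _; rewrite mulrC. Qed.
Lemma dotvDl u v w : dotv (u + v) w = dotv u w + dotv v w.
Proof. by rewrite /dotv -big_split; apply: eq_bigr => i _; rewrite !mxE mulrDl. Qed.
Lemma dotvZl a u v : dotv (a *: u) v = a * dotv u v.
Proof. by rewrite /dotv mulr_sumr; apply: eq_bigr => i _; rewrite !mxE mulrA. Qed.
Lemma dotvNl u v : dotv (- u) v = - dotv u v.
Proof. by rewrite -scaleN1r dotvZl mulN1r. Qed.
Lemma dotvBl u v w : dotv (u - v) w = dotv u w - dotv v w.
Proof. by rewrite dotvDl dotvNl. Qed.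
Lemma dotvDr u v w : dotv w (u + v) = dotv w u + dotv w v.
Proof. by rewrite !(dotvC w) dotvDl. Qed.
Lemma dotvZr a u v : dotv v (a *: u) = a * dotv v u.
Proof. by rewrite !(dotvC v) dotvZl. Qed.
Lemma dotvBr u v w : dotv w (u - v) = dotv w u - dotv w v.
Proof. by rewrite !(dotvC w) dotvBl. Qed.
Lemma dotv_ge0 u : 0 <= dotv u u.
Proof. by apply: sumr_ge0 => i _; rewrite -expr2 sqr_ge0. Qed.
Lemma dotv0l u : dotv 0 u = 0.
Proof. by rewrite -(scale0r 0) dotvZl mul0r. Qed.
Lemma enorm_sq u : enorm u ^+ 2 = dotv u u.
Proof. by rewrite /enorm sqr_sqrtr // dotv_ge0. Qed.

Lemma dotv_amgm lam u v : 0 < lam ->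
  2 * dotv u v <= lam * dotv u u + dotv v v / lam.
Proof.
move=> lp; rewrite /dotv !mulr_sumr mulr_suml -big_split /=.
apply: ler_sum => i _.
have : 0 <= (lam * u ord0 i - v ord0 i) ^+ 2 / lam by rewrite divr_ge0 ?sqr_ge0 ?ltW.
have -> : (lam * u ord0 i - v ord0 i) ^+ 2 / lam =
   lam * (u ord0 i * u ord0 i) + v ord0 i * v ord0 i / lam - 2 * (u ord0 i * v ord0 i).
  by field; rewrite gt_eqF.
by rewrite subr_ge0.
Qed.

Lemma lip_sq (g : 'rV[R]_d -> 'rV[R]_d) L x y : 0 <= L -> lipschitz_euclid g L ->
  dotv (g x - g y) (g x - g y) <= L ^+ 2 * dotv (x - y) (x - y).
Proof.
move=> L0 hl; rewrite -!enorm_sq -exprMn ler_pXn2r // ?nnegrE ?mulr_ge0 ?sqrtr_ge0 //.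
Qed.
End S.
Lemma phi_derive {R : realType} {d : nat} (f : 'rV[R]_d -> R) g x u (t : R) :
  is_gradient f g ->
  is_derive t 1 (fun t => f (x + t *: u)) (dotv (g (x + t *: u)) u).
Proof.
move=> hg; have [df dd] := hg (x + t *: u).
have E : (fun h : R => h^-1 *: (((fun t => f (x + t *: u)) \o shift t) (h *: 1) - f (x + t *: u)))
  = (fun h : R => h^-1 *: ((f \o shift (x + t *: u)) (h *: u) - f (x + t *: u))).
  apply: funext => h /=; congr (_ *: (f _ - _)).
  by rewrite /shift /= [h%:A]mulr1 scalerDl addrCA.
have dv : derivable f (x + t *: u) u by exact: diff_derivable.
split.
  by rewrite /derivable E.
by rewrite /derive E -/(derive _ _ _) deriveE // dd.
Qed.

Lemma descent {R : realType} {d : nat} (f : 'rV[R]_d -> R) g (L : R) x y :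
  is_gradient f g -> 0 < L -> lipschitz_euclid g L ->
  f y <= f x + dotv (g x) (y - x) + L / 2 * dotv (y - x) (y - x).
Proof.
move=> hg L0 hl.
set u := y - x; set a := dotv (g x) u; set b := L / 2 * dotv u u.
pose phi := fun t : R => f (x + t *: u).
pose psi : R -> R := phi - (a \*: (@id R) + b \*: ((@id R) ^+ 2)).
have dpsi t : is_derive t (1:R) psi
   (dotv (g (x + t *: u)) u - (a *: (1:R) + b *: ((2%:R * t ^+ 1) *: (1:R)))).
  apply: is_deriveB; first exact: phi_derive.
have psiE t : psi t = f (x + t *: u) - (a * t + b * t ^+ 2).
  by rewrite /psi /phi /= !fctE.
have : psi 1 <= psi 0.
  apply: (@ler0_derive1_le_cc _ psi 0 1).
  - by move=> t _; apply: ex_derive.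
  - move=> t; rewrite in_itv /= => /andP[t0 t1].
    rewrite derive1E derive_val.
    have Lt : 0 < L * t by rewrite mulr_gt0.
    rewrite [a%:A]mulr1 [(2 * t ^+ 1)%:A]mulr1 expr1 /GRing.scale /=.
    set p := x + t *: u.
    have hD : dotv (g p - g x) u = dotv (g p) u - a by rewrite dotvBl.
    have Lti : 0 < (L * t)^-1 by rewrite invr_gt0.
    have h1 := dotv_amgm (L * t)^-1 (g p - g x) u Lti.
    have h2 := lip_sq g L p x (ltW L0) hl.
    have hpx : p - x = t *: u by rewrite /p addrC addKr.
    rewrite hpx dotvZl dotvZr in h2.
    have h3 : (L * t)^-1 * dotv (g p - g x) (g p - g x) <= L * t * dotv u u.
      apply: le_trans (ler_wpM2l (ltW Lti) h2) _.
      rewrite le_eqVlt; apply/orP; left; apply/eqP; field.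
      by rewrite !gt_eqF.
    rewrite invrK in h1.
    rewrite /b; lra.
  - apply: derivable_within_continuous => t _; apply: ex_derive.
  - by rewrite in_itv /= lexx ler01.
  - by rewrite in_itv /= lexx ler01.
  - exact: ler01.
rewrite !psiE scale0r addr0 scale1r.
have -> : x + u = y by rewrite /u addrC subrK.
rewrite expr1n !mulr1 expr0n /= !mulr0 addr0 subr0.
lra.
Qed.

Theorem mainTheorem16 (R : realType) (d : nat)
  (f : 'rV[R]_d -> R) (gradf : 'rV[R]_d -> 'rV[R]_d)
  (L h beta c C : R) (gamma : nat -> R) (x : nat -> 'rV[R]_d) :
  C2_with_gradient f gradf ->
  0 < L -> lipschitz_euclid gradf L ->
  0 < h -> 0 <= beta -> 0 < c -> c <= C ->
  (forall k : nat, (1 <= k)%N -> c <= gamma k <= C) ->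
  beta + h / 2 < c / L ->
  (forall k : nat, (1 <= k)%N ->
     let alpha := 1 / (1 + gamma k * h) in
     let s := h ^+ 2 * alpha in
     let y := x k + alpha *: (x k - x k.-1) in
     x k.+1 = y - s *: gradf (x k + (beta / h) *: (x k - x k.-1))) ->
  let v := fun k : nat => x k - x k.-1 in
  let alpha_t := beta * L / h + 1 / h ^+ 2 in
  let V := fun k : nat => f (x k) + alpha_t / 2 * enorm (v k) ^+ 2 in
  let delta := c / h - L / 2 - beta * L / h in
  0 < delta /\
  (forall k : nat, (1 <= k)%N -> V k.+1 <= V k - delta * enorm (v k.+1) ^+ 2).
Proof.
move=> [hg _] L0 hl h0 b0 c0 cC hgam hbc hrec v alpha_t V delta.
have hLc : L * (beta + h / 2) < c by rewrite mulrC -ltr_pdivlMr.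
have dpos : 0 < delta.
  have -> : delta = (c - L * (beta + h / 2)) / h.
    by rewrite /delta; field; rewrite gt_eqF.
  by rewrite divr_gt0 // subr_gt0.
split => // k k1.
have /andP[gc gC] := hgam k k1.
have hx := hrec k k1; simpl in hx.
rewrite /V /v /=.
set g := gradf in hx *.
set xk := x k in hx *; set xp := x k.-1 in hx *; set xn := x k.+1 in hx *.
set vv := xk - xp in hx *; set w := xn - xk.
set z := xk + (beta / h) *: vv in hx *.
set al := 1 / (1 + gamma k * h) in hx *.
have gp : 0 < gamma k by apply: lt_le_trans gc.
have alp : 0 < al by rewrite divr_gt0 // addr_gt0 // mulr_gt0.
have hw : w = al *: vv - (h ^+ 2 * al) *: g z.
  by rewrite /w hx addrAC [xk + _]addrC addrK.
have hsg : (h ^+ 2 * al) *: g z = al *: vv - w by rewrite hw opprB addrC subrK.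
set W := dotv w w; set Vv := dotv vv vv; set VW := dotv vv w.
set P := dotv (g z) w; set Q := dotv (g xk - g z) w.
have hP : P = VW / h ^+ 2 - W / h ^+ 2 - gamma k / h * W.
  have : (h ^+ 2 * al) * P = al * VW - W.
    by rewrite /P -dotvZl hsg dotvBl dotvZl.
  move=> e.
  have ha : al * (1 + gamma k * h) = 1.
    by rewrite /al mul1r mulVf // gt_eqF // addr_gt0 // mulr_gt0.
  have E1 : (1 + gamma k * h) * (h ^+ 2 * al * P) = h ^+ 2 * P * (al * (1 + gamma k * h)) by ring.
  rewrite ha mulr1 e in E1.
  have -> : P = h ^+ 2 * P / h ^+ 2 by rewrite mulrAC divff ?mul1r // expf_neq0 // gt_eqF.
  have E2 : (1 + gamma k * h) * (al * VW - W) = VW * (al * (1 + gamma k * h)) - (1 + gamma k * h) * W by ring.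
  rewrite ha mulr1 in E2.
  by rewrite -E1 E2; field; rewrite gt_eqF.
have hdesc := descent f g L xk xn hg L0 hl.
rewrite -/w -/W in hdesc.
have hPQ : dotv (g xk) w = P + Q by rewrite /P /Q dotvBl addrC subrK.
rewrite hPQ hP in hdesc.
have F2 : 2 * VW <= Vv + W.
  by have := dotv_amgm 1 vv w ltr01; rewrite mul1r invr1 mulr1.
have F2' : 2 * (VW / h ^+ 2) <= Vv / h ^+ 2 + W / h ^+ 2.
  by rewrite mulrA -mulrDl ler_wpM2r // invr_ge0 exprn_ge0 // ltW.
have F3 : c / h * W <= gamma k / h * W.
  apply: ler_wpM2r; first exact: dotv_ge0.
  by rewrite ler_pM2r ?invr_gt0.
have F1 : 2 * Q <= beta * L / h * Vv + beta * L / h * W.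
  have [b0'|bpos] : beta = 0 \/ 0 < beta.
    by move: b0; rewrite le_eqVlt => /orP[/eqP<-|->]; [left|right].
    rewrite /Q /z b0' mul0r scale0r addr0 subrr dotv0l !mul0r mulr0 addr0.
    by [].
  have lp : 0 < h / (beta * L) by rewrite divr_gt0 // mulr_gt0.
  have h1 := dotv_amgm (h / (beta * L)) (g xk - g z) w lp.
  have h2 := lip_sq g L xk z (ltW L0) hl.
  have hz : xk - z = - ((beta / h) *: vv) by rewrite /z opprD addrA subrr add0r.
  have hzz : dotv (xk - z) (xk - z) = (beta / h) ^+ 2 * Vv.
    by rewrite hz dotvNl dotvC dotvNl opprK dotvZl dotvZr mulrA -expr2.
  rewrite hzz in h2.
  have h3 : h / (beta * L) * dotv (g xk - g z) (g xk - g z) <= beta * L / h * Vv.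
    apply: le_trans (ler_wpM2l (ltW lp) h2) _.
    rewrite le_eqVlt; apply/orP; left; apply/eqP; field.
    by rewrite !gt_eqF.
  have h4 : W / (h / (beta * L)) = beta * L / h * W.
    by field; rewrite !gt_eqF.
  rewrite -/Q -/W h4 in h1.
  lra.
rewrite !enorm_sq -/W -/Vv.
rewrite /alpha_t /delta; lra.
Qed.
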